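(* Let $k=p^\ell$ with $p$ a prime and $\ell>0$. For every $L\in\mathcal L_k$, the subgraph of $\mathcal F_k$ induced on $\phi_k^{-1}(L)$ is connected.
   Context: The vertex set $V$ consists of all reduced fractions $p/q$ with $p,q\in\mathbb Z$, $\gcd(p,q)=1$, together with $1/0$; here $p/q$ and $(-p)/(-q)$ denote the same vertex. For vertices define $d(p/q,a/b)=|pb-qa|$. The graph $\mathcal F_k$ has vertex set $V$, with an edge between $p/q$ and $a/b$ exactly when $d(p/q,a/b)=k$. An element $(a,b)\in(\mathbb Z/k\mathbb Z)^2$ is admissible if for $\lambda\in\mathbb Z/k\mathbb Z$, $(\lambda a,\lambda b)=0$ implies $\lambda=0$; $\mathcal L_k$ is the set of admissible elements modulo $v\sim\lambda v$ for units $\lambda\in(\mathbb Z/k\mathbb Z)^*$; $\phi_k:V\to\mathcal L_k$ sends $p/q$ to the class of $(p\bmod k,q\bmod k)$. *)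

(* Defs.v *)
From HB Require Import structures.
From mathcomp Require Import all_boot all_order all_algebra.
Set Implicit Arguments. Unset Strict Implicit. Unset Printing Implicit Defensive.
Import Order.TTheory GRing.Theory Num.Theory.
Local Open Scope ring_scope.

(* A vertex p/q is represented by a pair (p, q) of integers with gcd(p,q) = 1;
   (p, q) and (-p, -q) represent the same vertex. *)
Definition is_vertex (v : int * int) : Prop := coprimez v.1 v.2.

Definition same_vertex (u v : int * int) : Prop :=
  u = v \/ u = (- v.1, - v.2).

Definition dF (u v : int * int) : int := `|u.1 * v.2 - u.2 * v.1|.

Definition edgeF (k : nat) (u v : int * int) : bool := dF u v == k%:Z.

Definition admissible (k : nat) (x : 'Z_k * 'Z_k) : Prop :=
  forall lam : 'Z_k, (lam * x.1, lam * x.2) = (0, 0) -> lam = 0.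

Definition phi_rep (k : nat) (v : int * int) : 'Z_k * 'Z_k :=
  (v.1%:~R, v.2%:~R).

(* phi_k(v) equals the class L of the admissible element x in L_k,
   i.e. phi_rep v = lam x for some unit lam of Z/kZ *)
Definition in_class (k : nat) (x : 'Z_k * 'Z_k) (v : int * int) : Prop :=
  exists2 lam : 'Z_k, lam \is a GRing.unit & phi_rep k v = (lam * x.1, lam * x.2).

Definition in_fiber (k : nat) (x : 'Z_k * 'Z_k) (v : int * int) : Prop :=
  is_vertex v /\ in_class x v.

Definition connected_in_fiber (k : nat) (x : 'Z_k * 'Z_k) (u w : int * int) : Prop :=
  exists s : seq (int * int),
    (forall y, y \in s -> in_fiber x y) /\ path (edgeF k) u s /\ same_vertex (last u s) w.
Arguments in_class k x v : clear implicits.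
Arguments in_fiber k x v : clear implicits.
Arguments connected_in_fiber k x u w : clear implicits.
Arguments admissible k x : clear implicits.

(* Main.v *)
Require Import Defs.
From HB Require Import structures.
From mathcomp Require Import all_boot all_order all_algebra.
From mathcomp Require Import zify ring lra.
Import Order.TTheory GRing.Theory Num.Theory.
Local Open Scope ring_scope.

Definition det (u v : int * int) : int := u.1 * v.2 - u.2 * v.1.

Lemma zp_int k (z : int): (z%:~R : 'Z_k) = (-1)^+(z<0)%R * (`|z|%N)%:R.
Proof. by rewrite {1}[z]intEsign rmorphM rmorphXn rmorphN1. Qed.

Lemma zp_int_eq0 k (z : int) : (1 < k)%N -> (z%:~R : 'Z_k) = 0 -> (k%:Z %| z)%Z.
Proof.
move=> hk; rewrite zp_int => h0.
have h : (`|z|%:R : 'Z_k) = 0 by rewrite -[LHS](signrMK (z<0)%R) h0 mulr0.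
have h2 := val_Zp_nat hk `|z|; rewrite h /= in h2.
by rewrite dvdzE /=; apply/dvdnP; exists (`|z| %/ k)%N; rewrite {1}(divn_eq `|z| k) -h2 addn0.
Qed.

Lemma zp_int_unit k (z : int) : (1 < k)%N ->
  ((z%:~R : 'Z_k) \is a GRing.unit) = coprime k `|z|.
Proof.
move=> hk; rewrite zp_int unitrMr; first exact: (@unitZpE k `|z| hk). by rewrite unitrX // unitrN1.
Qed.

Lemma zp_K k : (1 < k)%N -> ((k%:Z)%:~R : 'Z_k) = 0.
Proof. by move=> hk; exact: (pchar_Zp hk). Qed.

Lemma cop_pow p l (c : int) : prime p -> (0 < l)%N ->
  coprime (p ^ l) `|c| = ~~ (p%:Z %| c)%Z.
Proof.
move=> hp hl; rewrite coprime_pexpl // prime_coprime // dvdzE.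
Qed.

Lemma edgeN k a b c : edgeF k (- a, - b) c = edgeF k (a, b) c.
Proof. rewrite /edgeF /dF /= -normrN; congr (_ == _); congr `|_|; ring. Qed.

Lemma conn_step k x u v v' : connected_in_fiber k x u v -> in_fiber k x v' ->
  edgeF k v v' -> connected_in_fiber k x u v'.
Proof.
move=> [s [Hs [Hp Hl]]] Hv' He; exists (rcons s v'); split.
  by move=> y; rewrite mem_rcons inE => /orP [/eqP->|/Hs].
split; last by rewrite last_rcons; left.
rewrite rcons_path Hp /=; case: Hl => ->; first by [].
by case: v He => v1 v2; rewrite edgeN.
Qed.
Lemma int_desc (p : nat) (a b c0 d0 : int) : a * d0 - b * c0 = 1 ->
  (1 < absz b)%N -> ~~ (p%:Z %| a)%Z ->
  exists c d, [/\ a * d - b * c = 1, (absz d < absz b)%N & ~~ (p%:Z %| c)%Z].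
Proof.
move=> h hb hpa.
have b0 : b != 0 by apply/eqP => b0; rewrite b0 in hb.
set n := (d0 %/ b)%Z; set d := (d0 %% b)%Z.
have hd0 : d0 = n * b + d by rewrite /n /d -divz_eq.
have dge : 0 <= d by rewrite /d modz_ge0.
have dlt : d < `|b| by rewrite /d ltz_mod.
have h1 : a * d - b * (c0 - n * a) = 1 by rewrite -h hd0; ring.
have dne : d != 0.
  apply/eqP => d0'; move: h1; rewrite d0' mulr0 sub0r -mulrN mulrC => /intUnitRing.unitzPl hu.
  lia.
case hc: (p%:Z %| c0 - n * a)%Z; last first.
  by exists (c0 - n * a), d; split => //; [lia | rewrite hc].
have [bpos|bneg] : 0 < b \/ b < 0 by lia.
- exists (c0 - n * a - a), (d - b); split.
  + by rewrite -h1; ring.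
  + lia.
  + apply/negP => hc2; move/negP: hpa; apply.
    have -> : a = (c0 - n * a) - (c0 - n * a - a) by ring.
    exact: rpredB.
- exists (c0 - n * a + a), (d + b); split.
  + by rewrite -h1; ring.
  + lia.
  + apply/negP => hc2; move/negP: hpa; apply.
    have -> : a = (c0 - n * a + a) - (c0 - n * a) by ring.
    exact: rpredB.
Qed.

Lemma class_comp K (x : 'Z_K * 'Z_K) v : in_class K x v ->
  exists2 lam : 'Z_K, lam \is a GRing.unit &
    (v.1%:~R = lam * x.1 /\ v.2%:~R = lam * x.2).
Proof.
by move=> [lam hl h]; exists lam => //; split; [have := congr1 fst h | have := congr1 snd h].
Qed.

Lemma fiber_props K p (x : 'Z_K * 'Z_K) u e v : (1 < K)%N ->
  (forall z : int, coprime K `|z| = ~~ (p%:Z %| z)%Z) ->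
  in_fiber K x u -> det u e = 1 -> in_fiber K x v ->
  (K%:Z %| det u v)%Z /\ ~~ (p%:Z %| det v e)%Z.
Proof.
move=> hK hcop [_ hu] he [_ hv].
case: (class_comp _ _ _ hu) => lu ulu [hu1 hu2].
case: (class_comp _ _ _ hv) => lv ulv [hv1 hv2].
split.
  apply: zp_int_eq0 => //.
  rewrite /det intrB !intrM hu1 hu2 hv1 hv2; ring.
rewrite -hcop -(zp_int_unit _ _ hK).
have h1 : ((det v e)%:~R : 'Z_K) * lu = lv * (det u e)%:~R.
  rewrite /det !intrB !intrM hu1 hu2 hv1 hv2; ring.
rewrite he /= mulr1 in h1.
by rewrite -(unitrMl _ ulu) h1.
Qed.

Lemma descent K p (x : 'Z_K * 'Z_K) u e v b : (1 < K)%N ->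
  (forall z : int, coprime K `|z| = ~~ (p%:Z %| z)%Z) ->
  in_fiber K x u -> det u e = 1 -> in_fiber K x v ->
  det u v = K%:Z * b -> (1 < absz b)%N ->
  exists v' d, [/\ in_fiber K x v', edgeF K v v', det u v' = K%:Z * d & (absz d < absz b)%N].
Proof.
move=> hK hcop hu he hv hvb hb.
have [_ hpa] := fiber_props K p x u e v hK hcop hu he hv.
have [vv _] := hv.
move/coprimezP: vv => [[xx yy] /= hxy].
set a := det v e in hpa.
have hbez : a * (xx * u.1 + yy * u.2) - b * (- K%:Z * (xx * e.1 + yy * e.2)) = 1.
  transitivity (a * (xx * u.1 + yy * u.2) + (K%:Z * b) * (xx * e.1 + yy * e.2)); first by ring.
  rewrite -hvb -hxy.
  transitivity ((xx * v.1 + yy * v.2) * det u e); first by rewrite /a /det; ring.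
  by rewrite he mulr1.
have [c [d [hcd hdb hpc]]] := int_desc p a b _ _ hbez hb hpa.
pose v' := (c * u.1 + K%:Z * d * e.1, c * u.2 + K%:Z * d * e.2).
exists v', d.
have hdet1 : det u v' = K%:Z * d.
  transitivity (K%:Z * d * det u e); first by rewrite /det /=; ring.
  by rewrite he mulr1.
have hdet2 : det v' e = c.
  transitivity (c * det u e); first by rewrite /det /=; ring.
  by rewrite he mulr1.
split => //.
- split.
  + have hcK : coprimez c K%:Z by rewrite coprimezE /= coprime_sym hcop.
    move/coprimezP: hcK => [[r s] /= hrs].
    apply/coprimezP; exists ((r - s * K%:Z * b) * e.2 - s * a * u.2, s * a * u.1 - (r - s * K%:Z * b) * e.1) => /=.
    transitivity ((r - s * K%:Z * b) * det v' e + s * a * det u v'); first by rewrite /det /=; ring.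
    rewrite hdet1 hdet2.
    transitivity (r * c + s * K%:Z * (a * d - b * c)); first by ring.
    by rewrite hcd mulr1.
  + have [_ hu'] := hu.
    case: (class_comp _ _ _ hu') => lu ulu [hu1 hu2].
    exists (c%:~R * lu).
      by rewrite unitrMr // (zp_int_unit _ _ hK) hcop.
    rewrite /phi_rep /= !intrD !intrM zp_K // !mul0r !addr0 hu1 hu2.
    by rewrite !mulrA.
- rewrite /edgeF /dF.
  have -> : v.1 * v'.2 - v.2 * v'.1 = c * - det u v + K%:Z * d * det v e by rewrite /det /=; ring.
  rewrite hvb -/a.
  have -> : c * - (K%:Z * b) + K%:Z * d * a = K%:Z * (a * d - b * c) by ring.
  by rewrite hcd mulr1.
Qed.

Lemma edge_sym k a b : edgeF k a b = edgeF k b a.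
Proof. by rewrite /edgeF /dF -normrN; congr (_ == _); congr `|_|; ring. Qed.

Lemma reach K p (x : 'Z_K * 'Z_K) u e : (1 < K)%N ->
  (forall z : int, coprime K `|z| = ~~ (p%:Z %| z)%Z) ->
  in_fiber K x u -> det u e = 1 ->
  forall n v b, in_fiber K x v -> det u v = K%:Z * b -> (absz b < n)%N ->
  connected_in_fiber K x u v.
Proof.
move=> hK hcop hu he; elim=> [//|n IH] v b hv hvb hbn.
have [b0|[b1|bge]] : b = 0 \/ absz b = 1%N \/ (1 < absz b)%N by lia.
- have [vv _] := hv.
  move/coprimezP: vv => [[xx yy] /= hxy].
  have h1 : v.1 = det v e * u.1.
    transitivity (det v e * u.1 + det u v * e.1); last by rewrite hvb b0 mulr0 mul0r addr0.
    transitivity (v.1 * det u e); first by rewrite he mulr1.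
    by rewrite /det; ring.
  have h2 : v.2 = det v e * u.2.
    transitivity (det v e * u.2 + det u v * e.2); last by rewrite hvb b0 mulr0 mul0r addr0.
    transitivity (v.2 * det u e); first by rewrite he mulr1.
    by rewrite /det; ring.
  have hu1 : (xx * u.1 + yy * u.2) * det v e = 1.
    by rewrite -hxy h1 h2; ring.
  move/intUnitRing.unitzPl: hu1 => hunit.
  have [ha|ha] : det v e = 1 \/ det v e = -1 by lia.
  + exists [::]; split => //; split => //=; left.
    move: h1 h2; rewrite ha !mul1r => h1 h2.
    by rewrite [v]surjective_pairing h1 h2 -surjective_pairing.
  + exists [::]; split => //; split => //=; right.
    move: h1 h2; rewrite ha !mulN1r => h1 h2.
    by rewrite h1 h2 !opprK -surjective_pairing.
- exists [:: v]; split; first by move=> y; rewrite inE => /eqP ->.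
  split; last by left.
  rewrite /= andbT /edgeF /dF -/(det u v) hvb normrM.
  have -> : `|b| = 1 by lia.
  by rewrite mulr1.
- have [v' [d [hv' he' hd1 hd2]]] := descent K p x u e v b hK hcop hu he hv hvb bge.
  apply: (conn_step _ _ _ v').
  + apply: (IH v' d) => //; lia.
  + exact: hv.
  + by rewrite edge_sym.
Qed.

Theorem proposition4p2 (p l : nat) (hp : prime p) (hl : (0 < l)%N)
  (x : 'Z_(p ^ l) * 'Z_(p ^ l)) (hx : admissible (p ^ l) x) (u w : int * int) :
  in_fiber (p ^ l) x u -> in_fiber (p ^ l) x w -> connected_in_fiber (p ^ l) x u w.
Proof.
move=> hu hw.
have hK : (1 < p ^ l)%N.
  by rewrite -(expn0 p) ltn_exp2l // prime_gt1.
have hcop : forall z : int, coprime (p ^ l) `|z| = ~~ (p%:Z %| z)%Z.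
  by move=> z; apply: cop_pow.
have [uu _] := hu.
move/coprimezP: uu => [[s t] /= hst].
pose e := (- t, s).
have he : det u e = 1 by rewrite /det /= -hst; ring.
have [hd _] := fiber_props (p ^ l) p x u e w hK hcop hu he hw.
move/dvdzP: hd => [b hb].
apply: (reach (p ^ l) p x u e hK hcop hu he (absz b).+1 w b hw) => //.
by rewrite hb mulrC.
Qed.
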